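(* With the setting of the context, assume additionally that $\mathbf{x}_i^+\ne\mathbf{x}_j^-$ for all $i,j$. Let $\mathbf{s}_0\in\mathbb{R}^d$ and fix $j_0\in\{1,\dots,M^-\}$ with $U_{j_0}(\mathbf{s}_0)<0$. For $i\in\{1,\dots,M^+\}$, $j\in\{1,\dots,M^-\}$ let $$\bar\rho_{ij} := \frac{\beta_j - \|\mathbf{s}_0-\mathbf{x}_j^-\|^2 + \|\mathbf{s}_0-\mathbf{x}_i^+\|^2}{2\|\mathbf{x}_j^- - \mathbf{x}_i^+\|},\qquad \beta_j = \tfrac{1}{\gamma}\Big(\log\alpha_j^- - \log\textstyle\sum_{i=1}^{M^+}\alpha_i^+\Big),$$ and define $r_u := \min_{i}\bar\rho_{i j_0}$ and $r_u^* := \min_{i}\max_{j}\bar\rho_{ij}$ (with $i$ ranging over $\{1,\dots,M^+\}$ and $j$ over $\{1,\dots,M^-\}$). Then $r_u\le r_u^*$, and every point $\mathbf{y}\in\mathbb{R}^d$ with $\|\mathbf{y}-\mathbf{s}_0\|<r_u^*$ (in particular every $\mathbf{y}$ with $\|\mathbf{y}-\mathbf{s}_0\|<r_u$) satisfies $F(\mathbf{y})<0$.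
   Context: Let $M^+, M^- \ge 1$; positive support vectors $\mathbf{x}_1^+,\dots,\mathbf{x}_{M^+}^+\in\mathbb{R}^d$ with weights $\alpha_i^+>0$; negative support vectors $\mathbf{x}_1^-,\dots,\mathbf{x}_{M^-}^-\in\mathbb{R}^d$ with weights $\alpha_j^->0$. Kernel: $k(\mathbf{x},\mathbf{y}) = \eta \exp(-\gamma\|\mathbf{x}-\mathbf{y}\|^2)$ with constants $\eta,\gamma>0$, Euclidean norm. Score function: $F(\mathbf{x}) = \sum_{i=1}^{M^+}\alpha_i^+ k(\mathbf{x}_i^+,\mathbf{x}) - \sum_{j=1}^{M^-}\alpha_j^- k(\mathbf{x}_j^-,\mathbf{x})$. $\mathbf{x}_*^+(\mathbf{x})$ denotes a positive support vector closest to $\mathbf{x}$. For $j\in\{1,\dots,M^-\}$, $U_j(\mathbf{x}) := k(\mathbf{x},\mathbf{x}_*^+(\mathbf{x}))\sum_{i=1}^{M^+}\alpha_i^+ - \alpha_j^- k(\mathbf{x},\mathbf{x}_j^-)$. A point $\mathbf{x}$ is free if $F(\mathbf{x})<0$. *)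

(* Defs.v *)
From Stdlib Require Import Reals List Lra.
Open Scope R_scope.

(* A vector of R^d is represented as a function nat -> R; only the
   coordinates 0..d-1 are meaningful. *)
Definition vec := nat -> R.

Definition fsum (n : nat) (f : nat -> R) : R :=
  fold_right Rplus 0 (map f (seq 0 n)).

(* minimum / maximum over indices 0..n-1 (meaningful for n >= 1) *)
Definition fmin (n : nat) (f : nat -> R) : R :=
  fold_right Rmin (f 0%nat) (map f (seq 0 n)).
Definition fmax (n : nat) (f : nat -> R) : R :=
  fold_right Rmax (f 0%nat) (map f (seq 0 n)).

Definition sqdist (d : nat) (x y : vec) : R := fsum d (fun k => (x k - y k) ^ 2).
Definition edist (d : nat) (x y : vec) : R := sqrt (sqdist d x y).

Definition kern (eta gamma : R) (d : nat) (x y : vec) : R :=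
  eta * exp (- gamma * (edist d x y) ^ 2).

Definition score (eta gamma : R) (d Mp Mn : nat)
  (xp : nat -> vec) (ap : nat -> R) (xn : nat -> vec) (an : nat -> R) (x : vec) : R :=
  fsum Mp (fun i => ap i * kern eta gamma d (xp i) x)
  - fsum Mn (fun j => an j * kern eta gamma d (xn j) x).

(* k(x, x_*^+(x)) where x_*^+(x) is a positive support vector closest to x:
   its value is eta * exp(-gamma * min_i ||x - x_i^+||^2). *)
Definition kern_closest (eta gamma : R) (d Mp : nat) (xp : nat -> vec) (x : vec) : R :=
  eta * exp (- gamma * fmin Mp (fun i => (edist d x (xp i)) ^ 2)).

Definition Uj (eta gamma : R) (d Mp : nat)
  (xp : nat -> vec) (ap : nat -> R) (xn : nat -> vec) (an : nat -> R) (j : nat) (x : vec) : R :=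
  kern_closest eta gamma d Mp xp x * fsum Mp ap - an j * kern eta gamma d x (xn j).

Definition beta (gamma : R) (Mp : nat) (ap an : nat -> R) (j : nat) : R :=
  / gamma * (ln (an j) - ln (fsum Mp ap)).

Definition rhobar (gamma : R) (d Mp : nat) (xp : nat -> vec) (ap : nat -> R)
  (xn : nat -> vec) (an : nat -> R) (s0 : vec) (i j : nat) : R :=
  (beta gamma Mp ap an j - (edist d s0 (xn j)) ^ 2 + (edist d s0 (xp i)) ^ 2)
  / (2 * edist d (xn j) (xp i)).

Definition r_u (gamma : R) (d Mp : nat) xp ap xn an s0 (j0 : nat) : R :=
  fmin Mp (fun i => rhobar gamma d Mp xp ap xn an s0 i j0).
Definition r_u_star (gamma : R) (d Mp Mn : nat) xp ap xn an s0 : R :=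
  fmin Mp (fun i => fmax Mn (fun j => rhobar gamma d Mp xp ap xn an s0 i j)).

Definition vec_neq (d : nat) (x y : vec) : Prop := exists k, (k < d)%nat /\ x k <> y k.

(* Main.v *)
Require Import Defs.
From Stdlib Require Import Reals List Lra Lia Psatz.
Open Scope R_scope.

Lemma fold_plus_b (l : list R) b : fold_right Rplus b l = fold_right Rplus 0 l + b.
Proof. induction l; simpl; lra. Qed.

Lemma fsum_S n f : fsum (S n) f = fsum n f + f n.
Proof.
  unfold fsum. rewrite seq_S, map_app, fold_right_app. simpl.
  rewrite fold_plus_b. lra.
Qed.

Lemma fsum_ext n f g : (forall k, (k < n)%nat -> f k = g k) -> fsum n f = fsum n g.
Proof.
  induction n; intros H; [reflexivity|]. rewrite !fsum_S, IHn by (intros; apply H; lia).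
  rewrite H by lia. reflexivity.
Qed.

Lemma fsum_le n f g : (forall k, (k < n)%nat -> f k <= g k) -> fsum n f <= fsum n g.
Proof.
  induction n; intros H; [unfold fsum; simpl; lra|]. rewrite !fsum_S.
  assert (fsum n f <= fsum n g) by (apply IHn; intros; apply H; lia).
  assert (f n <= g n) by (apply H; lia). lra.
Qed.

Lemma fsum_nonneg n f : (forall k, (k < n)%nat -> 0 <= f k) -> 0 <= fsum n f.
Proof.
  intros H. replace 0 with (fsum n (fun _ => 0)).
  - apply fsum_le. auto.
  - induction n; [reflexivity|]. rewrite fsum_S, IHn by (intros; apply H; lia). lra.
Qed.

Lemma fsum_single n f j : (forall k, (k < n)%nat -> 0 <= f k) -> (j < n)%nat -> f j <= fsum n f.
Proof.
  induction n; intros H Hj; [lia|]. rewrite fsum_S.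
  destruct (Nat.eq_dec j n) as [->|Hne].
  - assert (0 <= fsum n f) by (apply fsum_nonneg; intros; apply H; lia). lra.
  - assert (f j <= fsum n f) by (apply IHn; [intros; apply H; lia| lia]).
    assert (0 <= f n) by (apply H; lia). lra.
Qed.

Lemma fsum_pos n f : (1 <= n)%nat -> (forall k, (k < n)%nat -> 0 < f k) -> 0 < fsum n f.
Proof.
  intros Hn H. assert (f 0%nat <= fsum n f).
  { apply fsum_single; [intros; left; apply H; lia| lia]. }
  assert (0 < f 0%nat) by (apply H; lia). lra.
Qed.

Lemma fsum_mulr n f c : fsum n (fun k => f k * c) = fsum n f * c.
Proof. induction n; [unfold fsum; simpl; ring|]. rewrite !fsum_S, IHn. ring. Qed.

Lemma fsum_comb n f g h l m :
  (forall k, f k - g k - h k + l k = 2 * m k) ->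
  fsum n f - fsum n g - fsum n h + fsum n l = 2 * fsum n m.
Proof.
  intros H. induction n; [unfold fsum; simpl; ring|]. rewrite !fsum_S.
  specialize (H n). lra.
Qed.

Lemma cs_sq n a b :
  (fsum n (fun k => a k * b k)) ^ 2 <= fsum n (fun k => a k ^ 2) * fsum n (fun k => b k ^ 2).
Proof.
  induction n; [unfold fsum; simpl; lra|]. rewrite !fsum_S.
  set (C := fsum n (fun k => a k * b k)) in *.
  set (A := fsum n (fun k => a k ^ 2)) in *.
  set (B := fsum n (fun k => b k ^ 2)) in *.
  assert (HA : 0 <= A) by (apply fsum_nonneg; intros; nra).
  assert (HB : 0 <= B) by (apply fsum_nonneg; intros; nra).
  set (x := a n) ; set (y := b n).
  set (P := A * y^2 + B * x^2).
  clearbody C A B x y.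
  assert (HP : 0 <= P) by (unfold P; nra).
  assert (H1 : (2*C*x*y)^2 <= P^2).
  { assert ((2*C*x*y)^2 = 4 * C^2 * (x^2*y^2)) by ring.
    assert (0 <= x^2*y^2) by nra.
    assert (4 * C^2 * (x^2*y^2) <= 4 * (A*B) * (x^2*y^2)) by nra.
    assert (P^2 - 4*(A*B)*(x^2*y^2) = (A*y^2 - B*x^2)^2) by (unfold P; ring).
    assert (0 <= (A*y^2-B*x^2)^2) by apply pow2_ge_0. lra. }
  assert (H2 : 2*C*x*y <= P).
  { destruct (Rle_or_lt (2*C*x*y) P); auto. nra. }
  unfold P in H2. nra.
Qed.

Lemma cs n a b :
  fsum n (fun k => a k * b k) <=
  sqrt (fsum n (fun k => a k ^ 2)) * sqrt (fsum n (fun k => b k ^ 2)).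
Proof.
  rewrite <- sqrt_mult by (apply fsum_nonneg; intros; nra).
  set (C := fsum n (fun k => a k * b k)).
  apply Rle_trans with (Rabs C); [apply Rle_abs|].
  rewrite <- sqrt_Rsqr_abs. apply sqrt_le_1_alt. unfold Rsqr.
  pose proof (cs_sq n a b). fold C in H. lra.
Qed.

Lemma fmin_le_gen (f : nat -> R) b l x : In x l -> fold_right Rmin b (map f l) <= f x.
Proof.
  induction l; simpl; [tauto|]. intros [<-|H].
  - apply Rmin_l.
  - eapply Rle_trans; [apply Rmin_r| auto].
Qed.

Lemma fmin_le n f i : (i < n)%nat -> fmin n f <= f i.
Proof. intros H. apply fmin_le_gen. apply in_seq. lia. Qed.

Lemma fmax_ge_gen (f : nat -> R) b l x : In x l -> f x <= fold_right Rmax b (map f l).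
Proof.
  induction l; simpl; [tauto|]. intros [<-|H].
  - apply Rmax_l.
  - eapply Rle_trans; [auto| apply Rmax_r].
Qed.

Lemma fmax_ge n f i : (i < n)%nat -> f i <= fmax n f.
Proof. intros H. apply fmax_ge_gen. apply in_seq. lia. Qed.

Lemma fmax_attained_gen (f : nat -> R) b l :
  fold_right Rmax b (map f l) = b \/ exists x, In x l /\ fold_right Rmax b (map f l) = f x.
Proof.
  induction l; simpl; [auto|].
  destruct (Rle_dec (f a) (fold_right Rmax b (map f l))).
  - rewrite Rmax_right by auto. destruct IHl as [H|[x [Hx H]]]; auto.
    right; exists x; auto.
  - rewrite Rmax_left by lra. right; exists a; auto.
Qed.

Lemma fmax_attained n f : (1 <= n)%nat -> exists i, (i < n)%nat /\ fmax n f = f i.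
Proof.
  intros Hn. unfold fmax. destruct (fmax_attained_gen f (f 0%nat) (seq 0 n)) as [H|[x [Hx H]]].
  - exists 0%nat. split; [lia| auto].
  - exists x. apply in_seq in Hx. split; [lia| auto].
Qed.

Lemma fmin_mono_gen (f g : nat -> R) l :
  f 0%nat <= g 0%nat -> (forall x, In x l -> f x <= g x) ->
  fold_right Rmin (f 0%nat) (map f l) <= fold_right Rmin (g 0%nat) (map g l).
Proof.
  intros H0. induction l; simpl; intros H; auto.
  assert (f a <= g a) by (apply H; left; reflexivity).
  assert (fold_right Rmin (f 0%nat) (map f l) <= fold_right Rmin (g 0%nat) (map g l))
    by (apply IHl; intros; apply H; right; auto).
  unfold Rmin at 1 3. repeat destruct Rle_dec. all: lra.
Qed.

Lemma fmin_mono n f g : (1 <= n)%nat -> (forall i, (i < n)%nat -> f i <= g i) -> fmin n f <= fmin n g.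
Proof.
  intros Hn H. apply fmin_mono_gen; [apply H; lia|]. intros x Hx; apply in_seq in Hx; apply H; lia.
Qed.

Lemma sqdist_nonneg d x y : 0 <= sqdist d x y.
Proof. apply fsum_nonneg; intros; apply pow2_ge_0. Qed.

Lemma edist_sq d x y : (edist d x y) ^ 2 = sqdist d x y.
Proof. unfold edist. rewrite <- Rsqr_pow2. apply Rsqr_sqrt, sqdist_nonneg. Qed.

Lemma sqdist_sym d x y : sqdist d x y = sqdist d y x.
Proof. apply fsum_ext; intros; ring. Qed.

Lemma edist_sym d x y : edist d x y = edist d y x.
Proof. unfold edist; rewrite sqdist_sym; reflexivity. Qed.

Lemma edist_pos d x y : vec_neq d x y -> 0 < edist d x y.
Proof.
  intros [k [Hk Hne]]. unfold edist. apply sqrt_lt_R0.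
  assert ((x k - y k)^2 <= sqdist d x y).
  { apply (fsum_single d (fun k => (x k - y k)^2)); auto; intros; apply pow2_ge_0. }
  assert (Ht : x k - y k <> 0) by (intro; apply Hne; lra).
  set (t := x k - y k) in *. clearbody t.
  assert (0 < t^2) by nra. lra.
Qed.

Theorem corollary2 (d Mp Mn : nat) (eta gamma : R)
  (xp : nat -> vec) (ap : nat -> R) (xn : nat -> vec) (an : nat -> R)
  (s0 : vec) (j0 : nat) :
  (1 <= Mp)%nat -> (1 <= Mn)%nat -> 0 < eta -> 0 < gamma ->
  (forall i, (i < Mp)%nat -> 0 < ap i) ->
  (forall j, (j < Mn)%nat -> 0 < an j) ->
  (forall i j, (i < Mp)%nat -> (j < Mn)%nat -> vec_neq d (xp i) (xn j)) ->
  (j0 < Mn)%nat ->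
  Uj eta gamma d Mp xp ap xn an j0 s0 < 0 ->
  r_u gamma d Mp xp ap xn an s0 j0 <= r_u_star gamma d Mp Mn xp ap xn an s0 /\
  (forall y : vec, edist d y s0 < r_u_star gamma d Mp Mn xp ap xn an s0 ->
     score eta gamma d Mp Mn xp ap xn an y < 0).
Proof.
  intros HMp HMn Heta Hgam Hap Han Hneq Hj0 _.
  split.
  { unfold r_u, r_u_star. apply fmin_mono; auto. intros i Hi.
    apply (fmax_ge Mn (fun j => rhobar gamma d Mp xp ap xn an s0 i j)). auto. }
  intros y Hy.
  set (S := fsum Mp ap).
  assert (HS : 0 < S) by (apply fsum_pos; auto).
  set (g := fun i => kern eta gamma d (xp i) y).
  destruct (fmax_attained Mp g HMp) as [i [Hi Hgi]].
  assert (Hr : edist d y s0 < fmax Mn (fun j => rhobar gamma d Mp xp ap xn an s0 i j)).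
  { eapply Rlt_le_trans; [exact Hy|]. unfold r_u_star.
    apply (fmin_le Mp (fun i => fmax Mn (fun j => rhobar gamma d Mp xp ap xn an s0 i j))). auto. }
  destruct (fmax_attained Mn (fun j => rhobar gamma d Mp xp ap xn an s0 i j) HMn) as [j [Hj Hrj]].
  rewrite Hrj in Hr. clear Hrj.
  set (e := edist d (xn j) (xp i)).
  assert (He : 0 < e) by (unfold e; rewrite edist_sym; apply edist_pos; auto).
  set (bj := beta gamma Mp ap an j).
  assert (Hineq : 2 * e * edist d y s0 < bj - sqdist d s0 (xn j) + sqdist d s0 (xp i)).
  { unfold rhobar in Hr. fold bj e in Hr. rewrite !edist_sq in Hr.
    apply (Rmult_lt_compat_l (2*e)) in Hr; [|lra].
    replace (2 * e * ((bj - sqdist d s0 (xn j) + sqdist d s0 (xp i)) / (2 * e)))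
      with (bj - sqdist d s0 (xn j) + sqdist d s0 (xp i)) in Hr by (field; lra).
    lra. }
  assert (Hid : sqdist d y (xn j) - sqdist d y (xp i) - sqdist d s0 (xn j) + sqdist d s0 (xp i)
     = 2 * fsum d (fun k => (y k - s0 k) * (xp i k - xn j k))).
  { apply fsum_comb. intros; ring. }
  assert (Hcs : fsum d (fun k => (y k - s0 k) * (xp i k - xn j k)) <= edist d y s0 * e).
  { unfold e. rewrite (edist_sym d (xn j)).
    exact (cs d (fun k => y k - s0 k) (fun k => xp i k - xn j k)). }
  assert (0 <= edist d y s0) by (apply sqrt_pos).
  assert (Hkey : sqdist d y (xn j) < bj + sqdist d y (xp i)) by nra.
  assert (Hexp : an j * exp (- gamma * bj) = S).
  { unfold bj, beta. fold S.
    replace (- gamma * (/ gamma * (ln (an j) - ln S))) with (ln S - ln (an j)) by (field; lra).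
    unfold Rminus; rewrite exp_plus, exp_Ropp, !exp_ln by auto. field. assert (0 < an j) by auto. lra. }
  assert (Hk : S * g i < an j * kern eta gamma d (xn j) y).
  { unfold g, kern. rewrite !edist_sq, (sqdist_sym d (xp i)), (sqdist_sym d (xn j)).
    rewrite <- Hexp.
    replace (an j * exp (- gamma * bj) * (eta * exp (- gamma * sqdist d y (xp i))))
      with (an j * eta * exp (- gamma * (bj + sqdist d y (xp i)))).
    2:{ replace (- gamma * (bj + sqdist d y (xp i))) with (- gamma * bj + - gamma * sqdist d y (xp i)) by ring.
        rewrite exp_plus. ring. }
    replace (an j * (eta * exp (- gamma * sqdist d y (xn j)))) with (an j * eta * exp (- gamma * sqdist d y (xn j))) by ring.
    apply Rmult_lt_compat_l. { assert (0 < an j) by auto. nra. }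
    apply exp_increasing. nra. }
  unfold score.
  assert (Hg0 : forall k, 0 < g k) by (intros; unfold g, kern; apply Rmult_lt_0_compat; auto; apply exp_pos).
  assert (H1 : fsum Mp (fun i0 => ap i0 * kern eta gamma d (xp i0) y) <= S * g i).
  { unfold S. rewrite <- fsum_mulr. apply fsum_le. intros k Hk'.
    assert (g k <= g i) by (rewrite <- Hgi; apply fmax_ge; auto).
    assert (0 < ap k) by auto. fold (g k). nra. }
  assert (H2 : an j * kern eta gamma d (xn j) y <= fsum Mn (fun j1 => an j1 * kern eta gamma d (xn j1) y)).
  { apply (fsum_single Mn (fun j1 => an j1 * kern eta gamma d (xn j1) y)); auto.
    intros k Hk'. assert (0 < an k) by auto. cbv beta. unfold kern.
    assert (0 < exp (- gamma * edist d (xn k) y ^ 2)) by apply exp_pos. left; apply Rmult_lt_0_compat; auto; apply Rmult_lt_0_compat; auto. }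
  lra.
Qed.
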